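(* Let $N\ge1$ and let $G$ be the graph consisting of a 5-cycle $C$ together with, for each of the $\binom{5}{3}=10$ triples $S$ of cycle vertices, a set of $N$ new vertices each adjacent exactly to the three vertices of $S$ (so $n=10N+5$). Let $F$ be uniform on $[0,1]$ and $p\in(0,1)$. Then $\mathcal{N}_{p\cdot\mathbf{1}}$ contains an equilibrium with revenue $5p(1-p^{1/3})$ and an equilibrium with revenue $(N+2)p(1-p)$. Consequently, for every fixed $p\in(0,1)$ the ratio between the best and worst equilibrium revenue at price $p$ is $\Omega(n)$.
   Context: Public-goods pricing game: $n$ buyers are the vertices of an undirected graph $G=([n],E)$; $N(i)=\{j:(i,j)\in E\}$ (so $i\notin N(i)$). Values i.i.d. uniform on $[0,1]$, $F(x)=\min\{1,x\}$ for $x\ge0$, $F(\infty)=1$. An equilibrium for price vector $\mathbf{p}$ is $\mathbf{T}\in[0,\infty]^n$ (buyer $i$ purchases iff $v_i\ge T_i$) with $T_i=p_i/\prod_{j\in N(i)}F(T_j)$ for all $i$ (convention $c/0=\infty$); $\mathcal{N}_{\mathbf{p}}$ is the set of equilibria; $\mathcal{R}(\mathbf{p},\mathbf{T})=\sum_ip_i(1-F(T_i))$; $p\cdot\mathbf{1}$ is the uniform price vector. *)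

(* Defs.v *)
From Stdlib Require Import Reals List Arith.
Import ListNotations.
Open Scope R_scope.

Inductive ereal := Fin (x : R) | Inf.

Definition ereal_nonneg (t : ereal) : Prop :=
  match t with Fin x => 0 <= x | Inf => True end.

Definition Funif (t : ereal) : R :=
  match t with Fin x => Rmin 1 x | Inf => 1 end.

Definition ediv (c d : R) : ereal :=
  if Req_EM_T d 0 then Inf else Fin (c / d).

(* An undirected graph on vertex set [n] = {0,...,n-1}. *)
Record graph := Graph { nv : nat; adj : nat -> nat -> bool }.

Definition nbrs (g : graph) (i : nat) : list nat :=
  filter (adj g i) (seq 0 (nv g)).

Definition prodF (g : graph) (T : nat -> ereal) (i : nat) : R :=
  fold_right Rmult 1 (map (fun j => Funif (T j)) (nbrs g i)).

Definition is_equilibrium (g : graph) (p : nat -> R) (T : nat -> ereal) : Prop :=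
  forall i, (i < nv g)%nat ->
    ereal_nonneg (T i) /\ T i = ediv (p i) (prodF g T i).

Definition revenue (g : graph) (p : nat -> R) (T : nat -> ereal) : R :=
  fold_right Rplus 0 (map (fun i => p i * (1 - Funif (T i))) (seq 0 (nv g))).

Definition uniform_price (p : R) : nat -> R := fun _ => p.

(* The specific graph: vertices 0..4 form the 5-cycle C; vertex 5 + m
   (0 <= m < 10N) is a new vertex attached to the triple number (m mod 10),
   so each of the 10 triples gets exactly N new vertices. *)
Definition triples : list (list nat) :=
  [[0;1;2]; [0;1;3]; [0;1;4]; [0;2;3]; [0;2;4];
   [0;3;4]; [1;2;3]; [1;2;4]; [1;3;4]; [2;3;4]]%nat.

Definition in_triple (i t : nat) : bool := existsb (Nat.eqb i) (nth t triples []).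

Definition cyc_adj (i j : nat) : bool :=
  (Nat.eqb j ((i + 1) mod 5) || Nat.eqb i ((j + 1) mod 5))%bool.

Definition Gadj (u v : nat) : bool :=
  if (Nat.ltb u 5) then
    (if Nat.ltb v 5 then cyc_adj u v else in_triple u ((v - 5) mod 10))
  else
    (if Nat.ltb v 5 then in_triple v ((u - 5) mod 10) else false).

Definition Gcyc (N : nat) : graph := Graph (10 * N + 5) Gadj.

(* Main.v *)
Require Import Defs.
From Stdlib Require Import Reals List Arith Lia Lra.
Import ListNotations.
Open Scope R_scope.
Definition prodl (l : list R) := fold_right Rmult 1 l.
Definition suml (l : list R) := fold_right Rplus 0 l.

Lemma prodl_app l1 l2 : prodl (l1 ++ l2) = prodl l1 * prodl l2.
Proof. induction l1; simpl; unfold prodl in *; simpl; [ring|rewrite IHl1; ring]. Qed.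
Lemma suml_app l1 l2 : suml (l1 ++ l2) = suml l1 + suml l2.
Proof. induction l1; simpl; unfold suml in *; simpl; [ring|rewrite IHl1; ring]. Qed.

Lemma prod_filter {A} (a : A -> bool) (g : A -> R) l :
  fold_right Rmult 1 (map g (filter a l)) =
  fold_right Rmult 1 (map (fun j => if a j then g j else 1) l).
Proof. induction l; simpl; auto. destruct (a a0); simpl; rewrite IHl; ring. Qed.

Lemma seq_shift_add k len s : seq (s + k) len = map (fun j => (j + k)%nat) (seq s len).
Proof. revert s; induction len; intros s; simpl; auto. f_equal. 
  replace (S (s + k)) with (S s + k)%nat by lia. apply IHlen. Qed.

Lemma prod_per f N s : (forall j, (s <= j)%nat -> f (j + 10)%nat = f j) ->
  prodl (map f (seq s (10 * N))) = (prodl (map f (seq s 10))) ^ N.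
Proof. revert s; induction N; intros s Hf.
- simpl. replace (10*0)%nat with 0%nat by lia. reflexivity.
- replace (10 * S N)%nat with (10 + 10 * N)%nat by lia.
  rewrite seq_app, map_app, prodl_app, IHN.
  + replace (map f (seq (s + 10) 10)) with (map f (seq s 10)). simpl pow. reflexivity.
    rewrite seq_shift_add, map_map.
    apply map_ext_in. intros j Hj. apply in_seq in Hj. symmetry. apply Hf. lia.
  + intros j Hj; apply Hf; lia.
Qed.

Lemma sum_per f N s : (forall j, (s <= j)%nat -> f (j + 10)%nat = f j) ->
  suml (map f (seq s (10 * N))) = INR N * suml (map f (seq s 10)).
Proof. revert s; induction N; intros s Hf.
- simpl. replace (10*0)%nat with 0%nat by lia. simpl. ring.
- replace (10 * S N)%nat with (10 + 10 * N)%nat by lia.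
  rewrite seq_app, map_app, suml_app, IHN.
  + rewrite S_INR. replace (map f (seq (s + 10) 10)) with (map f (seq s 10)). ring.
    rewrite seq_shift_add, map_map.
    apply map_ext_in. intros j Hj. apply in_seq in Hj. symmetry. apply Hf. lia.
  + intros j Hj; apply Hf; lia.
Qed.

Lemma mod_per j : (5 <= j)%nat -> ((j + 10 - 5) mod 10 = (j - 5) mod 10)%nat.
Proof. intros. replace (j+10-5)%nat with ((j-5) + 1*10)%nat by lia. apply Nat.Div0.mod_add. Qed.

Lemma ltb5 j : (5 <= j)%nat -> Nat.ltb j 5 = false.
Proof. intros; apply Nat.ltb_ge; lia. Qed.

Lemma Gadj_per i j : (5 <= j)%nat -> Gadj i (j + 10) = Gadj i j.
Proof. intros H. unfold Gadj. rewrite (ltb5 j H), (ltb5 (j+10)) by lia. rewrite mod_per by lia. reflexivity. Qed.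

Definition mkT (c d : nat -> ereal) (j : nat) : ereal :=
  if Nat.ltb j 5 then c j else d ((j - 5) mod 10)%nat.

Lemma mkT_per c d j : (5 <= j)%nat -> mkT c d (j + 10) = mkT c d j.
Proof. intros H. unfold mkT. rewrite (ltb5 j H), (ltb5 (j+10)) by lia. rewrite mod_per by lia. reflexivity. Qed.

Lemma prodF_split N c d i : prodF (Gcyc N) (mkT c d) i =
  prodl (map (fun j => if Gadj i j then Funif (mkT c d j) else 1) (seq 0 5)) *
  (prodl (map (fun j => if Gadj i j then Funif (mkT c d j) else 1) (seq 5 10))) ^ N.
Proof. unfold prodF, nbrs. rewrite prod_filter. change (nv (Gcyc N)) with (10 * N + 5)%nat.
  replace (10 * N + 5)%nat with (5 + 10 * N)%nat by lia. rewrite (seq_app 5 (10*N) 0), map_app.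
  change (fold_right Rmult 1 ?l) with (prodl l). rewrite prodl_app. simpl adj. simpl (0+5)%nat. rewrite prod_per. reflexivity.
  intros j Hj. rewrite Gadj_per, mkT_per by lia. reflexivity.
Qed.

Lemma rev_split N p c d : revenue (Gcyc N) (uniform_price p) (mkT c d) =
  suml (map (fun i => p * (1 - Funif (mkT c d i))) (seq 0 5)) +
  INR N * suml (map (fun i => p * (1 - Funif (mkT c d i))) (seq 5 10)).
Proof. unfold revenue. change (nv (Gcyc N)) with (10 * N + 5)%nat. unfold uniform_price.
  replace (10 * N + 5)%nat with (5 + 10 * N)%nat by lia. rewrite (seq_app 5 (10*N) 0), map_app.
  change (fold_right Rplus 0 ?l) with (suml l).
  rewrite suml_app. simpl (0+5)%nat. rewrite sum_per. reflexivity.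
  intros j Hj. rewrite mkT_per by lia. reflexivity.
Qed.

Lemma ediv_pos c d : 0 < d -> ediv c d = Fin (c / d).
Proof. intros H. unfold ediv. destruct (Req_EM_T d 0); [lra|auto]. Qed.

Lemma pow_le_one x n : 0 <= x <= 1 -> x ^ n <= 1.
Proof. intros H; induction n; simpl; nra. Qed.

Lemma inv_ge1 x : 0 < x <= 1 -> 1 <= / x.
Proof. intros H. rewrite <- Rinv_1 at 1. apply Rinv_le_contravar; lra. Qed.

Lemma Rmin1_ge x : 1 <= x -> Rmin 1 x = 1.
Proof. apply Rmin_left. Qed.
Lemma Rmin1_le x : x <= 1 -> Rmin 1 x = x.
Proof. apply Rmin_right. Qed.
Ltac pos := repeat (match goal with |- 0 < _ * _ => apply Rmult_lt_0_compat
  | |- 0 < _ ^ _ => apply pow_lt | |- 0 < / _ => apply Rinv_0_lt_compat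
  | |- 0 < _ / _ => apply Rdiv_lt_0_compat end); try lra.

Definition TA q := mkT (fun _ => Fin q) (fun _ => Fin 1).

Lemma new_common N c d i : (5 <= i)%nat -> exists r, (r < 10)%nat /\
  mkT c d i = d r /\
  prodF (Gcyc N) (mkT c d) i =
  (if in_triple 0 r then Funif (c 0%nat) else 1) *
  ((if in_triple 1 r then Funif (c 1%nat) else 1) *
   ((if in_triple 2 r then Funif (c 2%nat) else 1) *
    ((if in_triple 3 r then Funif (c 3%nat) else 1) *
     ((if in_triple 4 r then Funif (c 4%nat) else 1) * 1)))) *
  (1 * (1 * (1 * (1 * (1 * (1 * (1 * (1 * (1 * (1 * 1)))))))))) ^ N.
Proof. intros Hi. exists ((i-5) mod 10)%nat. split; [apply Nat.mod_upper_bound; lia|].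
  split. { unfold mkT. rewrite ltb5 by lia. reflexivity. }
  rewrite prodF_split.
  assert (Hg: forall j, Gadj i j = if Nat.ltb j 5 then in_triple j ((i-5) mod 10) else false).
  { intros j. unfold Gadj. rewrite ltb5 by lia. reflexivity. }
  simpl. rewrite !Hg. simpl. reflexivity.
Qed.

Lemma eqA N q : 0 < q < 1 -> is_equilibrium (Gcyc N) (uniform_price (q*q*q)) (TA q).
Proof. intros Hq. assert (M1: Rmin 1 1 = 1) by (apply Rmin1_ge; lra).
  assert (Mq: Rmin 1 q = q) by (apply Rmin1_le; lra).
  intros i Hi. change (nv (Gcyc N)) with (10*N+5)%nat in Hi. unfold uniform_price.
  destruct (lt_dec i 5).
  - unfold TA. destruct i as [|[|[|[|[|i]]]]]; [..|lia]; rewrite prodF_split; simpl; 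
    unfold mkT; simpl; rewrite ?M1, ?Mq, ?Rmult_1_l, ?Rmult_1_r, ?pow1; (split; [lra|]); rewrite ediv_pos by pos; f_equal; field; lra.
  - unfold TA. destruct (new_common N (fun _ => Fin q) (fun _ => Fin 1) i) as [r [Hr [E1 E2]]]; [lia|].
    rewrite E1, E2. simpl Funif. rewrite ?M1, ?Mq, ?Rmult_1_l, ?Rmult_1_r, ?pow1.
    destruct r as [|[|[|[|[|[|[|[|[|[|r]]]]]]]]]]; [..|lia]; simpl;
    (split; [lra|]); rewrite ediv_pos by pos; f_equal; field; lra.
Qed.

Lemma revA N q : 0 < q < 1 -> revenue (Gcyc N) (uniform_price (q*q*q)) (TA q) = 5 * (q*q*q) * (1 - q).
Proof. intros Hq. assert (M1: Rmin 1 1 = 1) by (apply Rmin1_ge; lra).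
  assert (Mq: Rmin 1 q = q) by (apply Rmin1_le; lra).
  unfold TA. rewrite rev_split. simpl. rewrite ?M1, ?Mq. ring.
Qed.

Definition cB N p (j : nat) : ereal := match j with
  | 0%nat => Fin p | 1%nat => Fin (/(p * p ^ N)) | 2%nat => Fin p | _ => Fin (/ p ^ N) end.
Definition dB p (r : nat) : ereal := match r with
  | 0%nat | 3%nat | 4%nat => Fin (/ p) | 8%nat => Fin p | _ => Fin 1 end.
Definition TB N p := mkT (cB N p) (dB p).

Lemma eqB N p : 0 < p < 1 -> is_equilibrium (Gcyc N) (uniform_price p) (TB N p).
Proof. intros Hp. assert (M1: Rmin 1 1 = 1) by (apply Rmin1_ge; lra).
  assert (Mp: Rmin 1 p = p) by (apply Rmin1_le; lra).
  assert (HN: 0 < p ^ N <= 1) by (split; [pos|apply pow_le_one; lra]).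
  assert (HN1: 0 < p * p ^ N <= 1) by (split; [pos|nra]).
  assert (Mi: Rmin 1 (/p) = 1) by (apply Rmin1_ge, inv_ge1; lra).
  assert (MiN: Rmin 1 (/p^N) = 1) by (apply Rmin1_ge, inv_ge1; lra).
  assert (MiN1: Rmin 1 (/(p*p^N)) = 1) by (apply Rmin1_ge, inv_ge1; lra).
  intros i Hi. change (nv (Gcyc N)) with (10*N+5)%nat in Hi. unfold uniform_price.
  destruct (lt_dec i 5).
  - unfold TB. destruct i as [|[|[|[|[|i]]]]]; [..|lia]; rewrite prodF_split; simpl;
    unfold mkT; simpl; rewrite ?M1, ?Mp, ?Mi, ?MiN, ?MiN1, ?Rmult_1_l, ?Rmult_1_r, ?pow1;
    (split; [simpl; left; pos|]); rewrite ediv_pos by pos; f_equal; field; lra.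
  - unfold TB. destruct (new_common N (cB N p) (dB p) i) as [r [Hr [E1 E2]]]; [lia|].
    rewrite E1, E2. simpl Funif. rewrite ?M1, ?Mp, ?Mi, ?MiN, ?MiN1, ?Rmult_1_l, ?Rmult_1_r, ?pow1.
    destruct r as [|[|[|[|[|[|[|[|[|[|r]]]]]]]]]]; [..|lia]; simpl;
    rewrite ?M1, ?Mp, ?Mi, ?MiN, ?MiN1, ?Rmult_1_l, ?Rmult_1_r, ?pow1;
    (split; [simpl; left; pos|]); rewrite ediv_pos by pos; f_equal; field; lra.
Qed.

Lemma revB N p : 0 < p < 1 -> revenue (Gcyc N) (uniform_price p) (TB N p) = (INR N + 2) * p * (1 - p).
Proof. intros Hp. assert (M1: Rmin 1 1 = 1) by (apply Rmin1_ge; lra).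
  assert (Mp: Rmin 1 p = p) by (apply Rmin1_le; lra).
  assert (HN: 0 < p ^ N <= 1) by (split; [pos|apply pow_le_one; lra]).
  assert (HN1: 0 < p * p ^ N <= 1) by (split; [pos|nra]).
  assert (Mi: Rmin 1 (/p) = 1) by (apply Rmin1_ge, inv_ge1; lra).
  assert (MiN: Rmin 1 (/p^N) = 1) by (apply Rmin1_ge, inv_ge1; lra).
  assert (MiN1: Rmin 1 (/(p*p^N)) = 1) by (apply Rmin1_ge, inv_ge1; lra).
  unfold TB. rewrite rev_split. simpl. rewrite ?M1, ?Mp, ?Mi, ?MiN, ?MiN1. ring.
Qed.

Lemma qfacts p : 0 < p < 1 -> 0 < Rpower p (1/3) < 1 /\ Rpower p (1/3) * Rpower p (1/3) * Rpower p (1/3) = p.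
Proof. intros Hp. split.
  - unfold Rpower. split; [apply exp_pos|]. assert (ln p < 0) by (rewrite <- ln_1; apply ln_increasing; lra). replace 1 with (exp 0) at 2 by apply exp_0. apply exp_increasing. lra.
  - assert (E: Rpower (Rpower p (1/3)) (INR 3) = Rpower p (1/3)^3).
    { apply Rpower_pow. unfold Rpower; apply exp_pos. }
    rewrite Rpower_mult in E. replace (1/3 * INR 3) with 1 in E by (simpl; field).
    rewrite Rpower_1 in E by lra. rewrite E at 4. simpl; ring.
Qed.

Theorem mainTheorem16 :
  (forall (N : nat) (p : R), (1 <= N)%nat -> 0 < p < 1 ->
     (exists T, is_equilibrium (Gcyc N) (uniform_price p) T /\
        revenue (Gcyc N) (uniform_price p) T = 5 * p * (1 - Rpower p (1/3))) /\
     (exists T, is_equilibrium (Gcyc N) (uniform_price p) T /\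
        revenue (Gcyc N) (uniform_price p) T = (INR N + 2) * p * (1 - p)))
  /\
  (forall p : R, 0 < p < 1 ->
     exists c : R, 0 < c /\
       forall N : nat, (1 <= N)%nat ->
         exists T1 T2,
           is_equilibrium (Gcyc N) (uniform_price p) T1 /\
           is_equilibrium (Gcyc N) (uniform_price p) T2 /\
           0 < revenue (Gcyc N) (uniform_price p) T2 /\
           revenue (Gcyc N) (uniform_price p) T1 >=
             c * INR (nv (Gcyc N)) * revenue (Gcyc N) (uniform_price p) T2).
Proof.
  split.
  - intros N p HN Hp. destruct (qfacts p Hp) as [Hq Hq3]. split.
    + exists (TA (Rpower p (1/3))). pose proof (eqA N _ Hq) as EA. pose proof (revA N _ Hq) as RA.
      rewrite Hq3 in EA, RA. auto.
    + exists (TB N p). split; [apply eqB|apply revB]; auto.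
  - intros p Hp. destruct (qfacts p Hp) as [Hq Hq3].
    set (q := Rpower p (1/3)) in *.
    exists ((1-p)/(75*(1-q))). split; [pos|].
    intros N HN. exists (TB N p), (TA q).
    pose proof (eqA N _ Hq) as EA. pose proof (revA N _ Hq) as RA.
    rewrite Hq3 in EA, RA.
    split; [apply eqB; auto|]. split; [auto|].
    rewrite RA, revB by auto. split; [pos|].
    change (nv (Gcyc N)) with (10*N+5)%nat.
    assert (E: INR (10*N+5) = 10 * INR N + 5) by (rewrite plus_INR, mult_INR; simpl; ring).
    rewrite E. pose proof (pos_INR N).
    replace ((1 - p) / (75 * (1 - q)) * (10 * INR N + 5) * (5 * p * (1 - q)))
      with ((1-p)*p*(10 * INR N + 5)/15) by (field; lra).
    assert (0 < (1-p)*p) by pos. nra.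
Qed.
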